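(* Let $A\in\mathcal A_n$. Then $\tau(A)$ is naturally labeled.
   Context: $\mathcal A_n$ is the set of ordered products $A=A_1\times\cdots\times A_k$ of connected linear Nakayama algebras (over an algebraically closed field) with $n$ simple modules in total; its Kupisch series $[c_0,\dots,c_{n-1}]$ is the concatenation of those of the factors, where a connected linear Nakayama algebra with $m$ simple modules has Kupisch series $[c_0,\dots,c_{m-1}]$, $c_i=\dim e_iA$, characterized by $c_{i+1}+1\ge c_i\ge2$ for $0\le i<m-1$ and $c_{m-1}=1$. $\tau(A)$ is the tree on $\{0,\dots,n\}$, rooted at $n$, in which the parent of $i$ is $i+c_i$ for $0\le i<n$. A rooted tree with vertex set $\{0,\dots,n\}$ is naturally labeled if labels increase towards the root and, for each $i$, all children of $i$ have labels smaller than all children of $i+1$. *)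

(* Defs.v *)
From mathcomp Require Import all_boot.
Set Implicit Arguments. Unset Strict Implicit. Unset Printing Implicit Defensive.

(* Kupisch series [c_0,...,c_{m-1}] of a connected linear Nakayama algebra
   with m simple modules: c_{i+1}+1 >= c_i >= 2 for 0 <= i < m-1, c_{m-1} = 1. *)
Definition connected_linear_kupisch (c : seq nat) : Prop :=
  0 < size c /\
  nth 0 c (size c).-1 = 1 /\
  (forall i, i < (size c).-1 -> 2 <= nth 0 c i /\ nth 0 c i <= nth 0 c i.+1 + 1).

(* An element of A_n is an ordered product A_1 x ... x A_k of connected linear
   Nakayama algebras, represented by the ordered list of the Kupisch series of
   its factors; the total number of simple modules is n. *)
Definition in_An (n : nat) (factors : seq (seq nat)) : Prop :=
  (forall c, c \in factors -> connected_linear_kupisch c) /\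
  size (flatten factors) = n.

Definition kupisch (factors : seq (seq nat)) : seq nat := flatten factors.

(* tau(A): tree on {0,...,n} rooted at n; parent of i (0 <= i < n) is i + c_i. *)
Definition tau_parent (c : seq nat) (i : nat) : nat := i + nth 0 c i.

(* A rooted tree on {0,...,n} with root n, given by its parent map on
   {0,...,n-1}, is naturally labeled if labels increase towards the root
   (each parent lies in {0..n} and exceeds its child), and for each i all
   children of i are smaller than all children of i+1. *)
Definition naturally_labeled (n : nat) (par : nat -> nat) : Prop :=
  (forall i, i < n -> i < par i <= n) /\
  (forall i j k, i < n -> j < n -> k < n ->
     par j = i -> par k = i.+1 -> j < k).

(* Main.v *)
Require Import Defs.
From mathcomp Require Import all_boot.
From mathcomp Require Import zify.

Definition good (c : seq nat) : Prop :=
  (forall j, j < size c -> 0 < nth 0 c j /\ j + nth 0 c j <= size c) /\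
  (forall j, j.+1 < size c -> j + nth 0 c j <= j.+1 + nth 0 c j.+1).

Lemma good_nil : good [::].
Proof. by split => j. Qed.

Lemma good_cat a b : good a -> good b -> good (a ++ b).
Proof.
move=> [a1 a2] [b1 b2]; split => j; rewrite size_cat => Hj.
  rewrite nth_cat; case: (ltnP j (size a)) => H.
    by have [? ?] := a1 j H; split => //; lia.
  have [? ?] := b1 (j - size a) ltac:(lia); split => //; lia.
rewrite !nth_cat; case: (ltnP j.+1 (size a)) => H1.
  by rewrite (ltnW H1); apply: a2.
case: (ltnP j (size a)) => H2.
  have E : j.+1 = size a by lia.
  have [? ?] := a1 j H2; rewrite E subnn.
  have [? ?] := b1 0 ltac:(lia); lia.
have := b2 (j - size a) ltac:(lia).
have -> : (j - size a).+1 = j.+1 - size a by lia.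
lia.
Qed.

Lemma good_block c : connected_linear_kupisch c -> good c.
Proof.
move=> [Hs [Hl Hm]]; split.
  have bound : forall d, d < size c -> (size c).-1 - d + nth 0 c ((size c).-1 - d) <= size c.
    elim=> [|d IH] Hd.
      rewrite subn0 Hl; lia.
    have := IH ltac:(lia).
    have [_ Hx] := Hm ((size c).-1 - d.+1) ltac:(lia).
    have E : ((size c).-1 - d.+1).+1 = (size c).-1 - d by lia.
    rewrite E in Hx; lia.
  move=> j Hj; split.
    case: (ltnP j (size c).-1) => H.
      by have [? _] := Hm j H; lia.
    have -> : j = (size c).-1 by lia.
    by rewrite Hl.
  have := bound ((size c).-1 - j) ltac:(lia).
  have -> : (size c).-1 - ((size c).-1 - j) = j by lia.
  by [].
move=> j Hj; have [_ ?] := Hm j ltac:(lia); lia.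
Qed.

Lemma good_flatten fs : (forall c, c \in fs -> connected_linear_kupisch c) -> good (flatten fs).
Proof.
elim: fs => [|c fs IH] H /=; first exact: good_nil.
apply: good_cat; first by apply: good_block; apply: H; rewrite inE eqxx.
by apply: IH => d Hd; apply: H; rewrite inE Hd orbT.
Qed.

Lemma good_mono c k j : good c -> k <= j -> j < size c ->
  k + nth 0 c k <= j + nth 0 c j.
Proof.
move=> [_ G] Hkj; elim: j Hkj => [|j IH] Hkj Hj.
  by have -> : k = 0 by lia.
case: (ltnP k j.+1) => H.
  have := IH ltac:(lia) ltac:(lia); have := G j Hj; lia.
by have -> : k = j.+1 by lia.
Qed.

Theorem lemma3p5 (n : nat) (factors : seq (seq nat)) :
  in_An n factors -> naturally_labeled n (tau_parent (kupisch factors)).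
Proof.
move=> [Hf Hn].
have G : good (@flatten nat factors) by exact: (@good_flatten factors Hf). subst n.
rewrite /naturally_labeled /tau_parent /kupisch; split.
  move=> i Hi; have [? ?] := (proj1 G) i Hi. lia.
move=> i j k Hi Hj Hk Pj Pk.
case: (ltnP j k) => // H.
have := @good_mono _ k j G H Hj; lia.
Qed.
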